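(* Let $G=\operatorname{Gp}\langle X\mid R\rangle$ be a group, and let $\Re$ be a complete rewriting system for $G$ on the alphabet $X\cup X^{-1}$ which satisfies the condition $C^{+}$. Let $M=\operatorname{Mon}\langle X\mid \Re^{+}\rangle$ be the monoid presented by the generators $X$ and the relations $l=r$ for $(l\rightarrow r)\in\Re^{+}$. Then the monoid homomorphism $M\to G$ induced by the identity on $X$ is injective, i.e. for positive words $u,v\in X^{*}$, $u=v$ in $G$ implies $u=v$ in $M$; so $M$ embeds into $G$ as the submonoid of $G$ represented by positive words. In particular, any monoid $N$ isomorphic to $M$ embeds into $G$.
   Context: A rewriting system on an alphabet $\Sigma$ is a set of ordered pairs (rules) $l\rightarrow r$ in $\Sigma^{*}\times\Sigma^{*}$; a word $ulv$ reduces to $urv$ for any rule $l\rightarrow r$. $\Re$ is terminating if there is no infinite chain of reductions, confluent if any two words with a common ancestor under $\rightarrow^{*}$ have a common descendant, and complete if terminating and confluent. $\equiv_{\Re}$ denotes the congruence on $\Sigma^{*}$ generated by the rules of $\Re$. The monoid presentation of $G$ is $\operatorname{Mon}\langle X\cup X^{-1}\mid R\cup R_{0}\rangle$ with $R_{0}=\{xx^{-1}=1,\ x^{-1}x=1 : x\in X\}$; a rewriting system for $G$ is a rewriting system $\Re$ on $X\cup X^{-1}$ whose congruence $\equiv_{\Re}$ equals the congruence generated by $R\cup R_{0}$. A word in $(X\cup X^{-1})^{*}$ is positive if it lies in $X^{*}$ (the empty word $1$ counts as positive). $\Re^{+}$ denotes the set of all rules of $\Re$ whose left-hand side is a positive word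 (rules $l\rightarrow 1$ with $l$ positive are allowed). $\Re$ satisfies the condition $C^{+}$ if $\Re^{+}\neq\emptyset$ and every rule of $\Re$ with positive left-hand side has a positive right-hand side. *)

(* Defs.v *)
From Stdlib Require Import List Relations.
Import ListNotations.
Set Implicit Arguments.

Definition rsystem (A : Type) := list A -> list A -> Prop.

Definition step (A : Type) (Re : rsystem A) (w w' : list A) : Prop :=
  exists u v l r, Re l r /\ w = u ++ l ++ v /\ w' = u ++ r ++ v.

Definition reduces (A : Type) (Re : rsystem A) := clos_refl_trans (list A) (step Re).

Definition cong (A : Type) (Re : rsystem A) := clos_refl_sym_trans (list A) (step Re).

Definition terminating (A : Type) (Re : rsystem A) : Prop :=
  well_founded (fun y x => step Re x y).

Definition confluent (A : Type) (Re : rsystem A) : Prop :=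
  forall w a b, reduces Re w a -> reduces Re w b ->
    exists c, reduces Re a c /\ reduces Re b c.

Definition complete (A : Type) (Re : rsystem A) : Prop :=
  terminating Re /\ confluent Re.

(* Letters of X ∪ X^{-1}: inl x = x, inr x = x^{-1}. *)
Definition letter (X : Type) := (X + X)%type.

Definition pos (X : Type) (u : list X) : list (letter X) := map (@inl X X) u.

Definition positive (X : Type) (w : list (letter X)) : Prop :=
  exists u : list X, w = pos u.

Definition R0 (X : Type) : rsystem (letter X) :=
  fun l r => r = [] /\ exists x, l = [inl x; inr x] \/ l = [inr x; inl x].

Definition runion (A : Type) (R S : rsystem A) : rsystem A :=
  fun l r => R l r \/ S l r.

(* Re is a rewriting system for G = Gp<X | R> = Mon<X ∪ X^{-1} | R ∪ R0>. *)
Definition rewriting_system_for (X : Type) (R Re : rsystem (letter X)) : Prop :=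
  forall w w', cong Re w w' <-> cong (runion R (@R0 X)) w w'.

Definition Re_plus (X : Type) (Re : rsystem (letter X)) : rsystem (letter X) :=
  fun l r => Re l r /\ positive l.

Definition condC_plus (X : Type) (Re : rsystem (letter X)) : Prop :=
  (exists l r, Re_plus Re l r) /\
  (forall l r, Re l r -> positive l -> positive r).

(* The relations of M = Mon<X | Re^+>, as pairs of words over X. *)
Definition M_rels (X : Type) (Re : rsystem (letter X)) : rsystem X :=
  fun l r => Re_plus Re (pos l) (pos r).

(* Main.v *)
Require Import Defs.
From Stdlib Require Import List Relations.
Import ListNotations.

Lemma cr (A : Type) (Re : rsystem A) : confluent Re ->
  forall a b, cong Re a b -> exists c, reduces Re a c /\ reduces Re b c.
Proof.
  intros Hc a b H. induction H as [x y Hs|x|x y _ [c [H1 H2]]|x y z _ [c1 [H1 H2]] _ [c2 [H3 H4]]].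
  - exists y. split. apply rt_step; exact Hs. apply rt_refl.
  - exists x. split; apply rt_refl.
  - exists c; auto.
  - destruct (Hc y c1 c2 H2 H3) as [e [He1 He2]].
    exists e. split; eapply rt_trans; eauto.
Qed.

Lemma pos_split (X : Type) (w : list X) a l b :
  pos w = a ++ l ++ b -> exists a' l' b', w = a' ++ l' ++ b' /\ a = pos a' /\ l = pos l' /\ b = pos b'.
Proof.
  unfold pos. intro H. apply map_eq_app in H as [a' [m [H1 [H2 H3]]]].
  apply map_eq_app in H3 as [l' [b' [H4 [H5 H6]]]].
  exists a', l', b'. subst. auto.
Qed.

Lemma step_pos (X : Type) (Re : rsystem (letter X)) : condC_plus Re ->
  forall w t, step Re (pos w) t -> exists w', t = pos w' /\ step (M_rels Re) w w'.
Proof.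
  intros [_ HC] w t [a [b [l [r [HR [E1 E2]]]]]].
  apply pos_split in E1 as [a' [l' [b' [E [Ea [El Eb]]]]]]. subst.
  destruct (HC _ _ HR (ex_intro _ l' eq_refl)) as [r' Er]. subst.
  exists (a' ++ r' ++ b'). split.
  - unfold pos. rewrite !map_app. reflexivity.
  - exists a', b', l', r'. repeat split; auto. exists l'; reflexivity.
Qed.

Lemma red_pos (X : Type) (Re : rsystem (letter X)) : condC_plus Re ->
  forall w t, reduces Re (pos w) t -> exists w', t = pos w' /\ reduces (M_rels Re) w w'.
Proof.
  intros HC w t H. apply clos_rt_rt1n in H.
  remember (pos w) as pw eqn:Ew. revert w Ew.
  induction H as [x|x y z Hs _ IH]; intros w Ew.
  - exists w. split; auto. apply rt_refl.
  - subst. destruct (@step_pos _ _ HC _ _ Hs) as [w' [Ey Hw]].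
    destruct (IH w' Ey) as [w'' [Ez Hr]].
    exists w''. split; auto. eapply rt_trans; [apply rt_step; exact Hw| exact Hr].
Qed.

Lemma red_cong (A : Type) (Re : rsystem A) a b : reduces Re a b -> cong Re a b.
Proof.
  intro H; induction H.
  - apply rst_step; auto.
  - apply rst_refl.
  - eapply rst_trans; eauto.
Qed.

Theorem theorem3p7 (X : Type) (R Re : rsystem (letter X)) :
  rewriting_system_for R Re ->
  complete Re ->
  condC_plus Re ->
  forall u v : list X,
    cong (runion R (@R0 X)) (pos u) (pos v) ->
    cong (M_rels Re) u v.
Proof.
  intros Hrs [_ Hconf] HC u v H.
  apply Hrs in H.
  destruct (@cr _ _ Hconf _ _ H) as [c [H1 H2]].
  destruct (@red_pos _ _ HC _ _ H1) as [c1 [E1 R1]].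
  destruct (@red_pos _ _ HC _ _ H2) as [c2 [E2 R2]].
  assert (c1 = c2).
  { subst. unfold pos in E2. clear -E2. revert c2 E2.
    induction c1 as [|a c1 IH]; intros [|b c2] E; simpl in E; try discriminate; auto.
    injection E as Ea Ec. subst. f_equal. apply IH; exact Ec. }
  subst c2.
  eapply rst_trans. apply red_cong; exact R1. apply rst_sym, red_cong; exact R2.
Qed.
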